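(* Let $\mathcal S$ be a system of pairwise compatible splits of a finite set $X$, and consider the arrangement $\mathcal A(\mathcal S)=\{H_\sigma\mid\sigma\in\mathcal S\}$ in $V_0(X)$. For each $\mathcal S'\subseteq\mathcal S$ one has $\bigcap_{\sigma\in\mathcal S'}H_\sigma=\langle\mathbbm 1_i-\mathbbm 1_j: i\sim_{\pi(\mathcal S')}j\rangle$, and the assignment $\pi(\mathcal S')\mapsto\bigcap_{\sigma\in\mathcal S'}H_\sigma$ is a well-defined poset isomorphism from $\operatorname{im}\pi=\{\pi(\mathcal S')\mid\mathcal S'\subseteq\mathcal S\}$ (ordered so that $\rho\le\rho'$ iff $\rho'$ refines $\rho$) onto the intersection poset $\mathscr L(\mathcal A(\mathcal S))$ (ordered by reverse inclusion). Consequently, identifying the ground set of the matroid of $\mathcal A(\mathcal S)$ with $\mathcal S$, its closure operator is $$\operatorname{cl}(\mathcal S')=\{\sigma\in\mathcal S\mid \pi(\mathcal S'\cup\{\sigma\})=\pi(\mathcal S')\}.$$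
   Context: $X$ finite, $n=|X|$, $\mathbbm 1_A:=\sum_{x\in A}\mathbbm 1_x$ in $\mathbb R^X$, $V_0(X)=\{x\in\mathbb R^X\mid\sum_ix_i=0\}$. A split $A|B$ is an unordered partition of $X$ into two nonempty blocks; $A|B$ and $C|D$ are compatible if one of $A\cap C,A\cap D,B\cap C,B\cap D$ is empty. For $\sigma=A|B$, $v_\sigma:=\tfrac{|B|}{n}\mathbbm 1_A-\tfrac{|A|}{n}\mathbbm 1_B$ and $H_\sigma:=\{x\in V_0(X)\mid\langle x,v_\sigma\rangle=0\}$. For $\mathcal S'\subseteq\mathcal S$, $\pi(\mathcal S')$ is the partition of $X$ into classes of the relation ''$i,j$ lie on the same side of every split in $\mathcal S'$'' (for $\mathcal S'=\emptyset$ this is the one-block partition). The intersection poset $\mathscr L(\mathcal A)$ is the set of all intersections of subsets of $\mathcal A$ (empty intersection $=V_0(X)$), ordered by reverse inclusion. The closure of $\mathcal S'$ in the matroid of the arrangement is the set of $\sigma\in\mathcal S$ with $\bigcap_{\tau\in\mathcal S'}H_\tau\subseteq H_\sigma$. *)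

(* Defs.v *)
(* X = 'I_n (a finite set with n = |X| elements).
   Vectors in R^X are row vectors 'rV[R]_n; subspaces are {vspace 'rV[R]_n}. *)
From HB Require Import structures.
From mathcomp Require Import all_boot all_order all_algebra.
Set Implicit Arguments. Unset Strict Implicit. Unset Printing Implicit Defensive.
Import Order.TTheory GRing.Theory Num.Theory.
Local Open Scope ring_scope.

Section Defs.
Variables (R : realFieldType) (n : nat).

(* A split A|B of X = 'I_n is represented by its block A, with B = ~: A. *)
Definition is_split (A : {set 'I_n}) : bool := (A != set0) && (~: A != set0).

Definition compatible (A C : {set 'I_n}) : bool :=
  [|| A :&: C == set0, A :&: ~: C == set0, ~: A :&: C == set0
    | ~: A :&: ~: C == set0].

Definition ind (A : {set 'I_n}) : 'rV[R]_n := \row_i (i \in A)%:R.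

Definition dotv (x y : 'rV[R]_n) : R := \sum_i x 0 i * y 0 i.

Definition vsplit (A : {set 'I_n}) : 'rV[R]_n :=
  (#|~: A|%:R / n%:R) *: ind A - (#|A|%:R / n%:R) *: ind (~: A).

Definition V0 : {vspace 'rV[R]_n} :=
  lker (linfun (fun x : 'rV[R]_n => (dotv x (ind setT))%:M : 'rV[R]_1)).

Definition Hsplit (A : {set 'I_n}) : {vspace 'rV[R]_n} :=
  (V0 :&: lker (linfun (fun x : 'rV[R]_n => (dotv x (vsplit A))%:M : 'rV[R]_1)))%VS.

(* intersection of H_sigma over sigma in S' (empty intersection = V_0) *)
Definition capH (S' : {set {set 'I_n}}) : {vspace 'rV[R]_n} :=
  (V0 :&: \bigcap_(A in S') Hsplit A)%VS.

Definition piS (S' : {set {set 'I_n}}) : {set {set 'I_n}} :=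
  equivalence_partition
    (fun i j : 'I_n => [forall A in S', (i \in A) == (j \in A)]) [set: 'I_n].

Definition span_rel (rho : {set {set 'I_n}}) : {vspace 'rV[R]_n} :=
  << [seq ind [set p.1] - ind [set p.2] |
       p <- enum [pred p : 'I_n * 'I_n | pblock rho p.1 == pblock rho p.2]] >>%VS.

Definition refines (rho' rho : {set {set 'I_n}}) : bool :=
  [forall B in rho', [exists C in rho, B \subset C]].

Definition im_pi (S : {set {set 'I_n}}) : pred {set {set 'I_n}} :=
  fun rho => [exists S' : {set {set 'I_n}}, (S' \subset S) && (piS S' == rho)].

Definition int_poset (S : {set {set 'I_n}}) : pred {vspace 'rV[R]_n} :=
  fun U => [exists S' : {set {set 'I_n}}, (S' \subset S) && (U == capH S')].

Definition mcl (S S' : {set {set 'I_n}}) : {set {set 'I_n}} :=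
  [set A in S | (capH S' <= Hsplit A)%VS].

End Defs.

Arguments int_poset R {n} S.
Arguments mcl R {n} S S'.
Arguments capH R {n} S'.
Arguments span_rel R {n} rho.

(* Main.v *)
Require Import Defs.
From HB Require Import structures.
From mathcomp Require Import all_boot all_order all_algebra.
Import Order.TTheory GRing.Theory Num.Theory.
Local Open Scope ring_scope.
Set Implicit Arguments. Unset Strict Implicit. Unset Printing Implicit Defensive.
From Stdlib Require Import FunctionalExtensionality.

Section S.
Variables (R : realFieldType) (n : nat).
Implicit Types (x : 'rV[R]_n) (A C D : {set 'I_n}) (T : {set {set 'I_n}}).

Definition sm x A := \sum_(i in A) x 0 i.

Lemma dotv_ind x A : dotv x (ind R A) = sm x A.
Proof.
rewrite /dotv /sm [RHS]big_mkcond /=; apply: eq_bigr => i _.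
by rewrite mxE mulr_natr mulrb.
Qed.

Lemma memker u x :
  (x \in lker (linfun (fun x : 'rV[R]_n => (dotv x u)%:M : 'rV[R]_1))) = (dotv x u == 0).
Proof.
have -> : (fun x : 'rV[R]_n => (dotv x u)%:M : 'rV[R]_1) = mulmxr u^T.
  apply: functional_extensionality => y /=.
  apply/rowP => j; rewrite ord1 !mxE /= mulr1n /dotv.
  by apply: eq_bigr => i _; rewrite mxE.
rewrite memv_ker lfunE /=.
apply/eqP/eqP => [/rowP/(_ 0)|H].
  rewrite !mxE => <-; rewrite /dotv; apply: eq_bigr => i _; by rewrite mxE.
apply/matrixP => i j; rewrite !ord1 !mxE; transitivity (dotv x u); last exact: H. by apply: eq_bigr => k _; rewrite mxE.
Qed.

Lemma smC x A : sm x (~: A) = sm x setT - sm x A.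
Proof. by rewrite /sm [in RHS](big_setID (A:=setT) A) setTI setTD; rewrite [X in X - _]/(_ + _) addrC addKr. Qed.

Lemma memV0 x : (x \in V0 R n) = (sm x setT == 0).
Proof. by rewrite /V0 memker dotv_ind. Qed.

Lemma dotv_lin x a b u v : dotv x (a *: u - b *: v) = a * dotv x u - b * dotv x v.
Proof.
rewrite /dotv !mulr_sumr -sumrB; apply: eq_bigr => i _; rewrite !mxE.
by rewrite mulrBr mulrCA [x 0 i * (b * _)]mulrCA.
Qed.

Lemma memH x A : x \in V0 R n -> (x \in Hsplit R A) = (sm x A == 0).
Proof.
rewrite memV0 => /eqP h; rewrite /Hsplit memv_cap memV0 h eqxx /= memker.
rewrite /vsplit dotv_lin !dotv_ind smC h sub0r mulrN opprK -mulrDl.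
have [n0|npos] := posnP n.
  rewrite /sm big1 ?mulr0 // => i _; have := ltn_ord i; by rewrite {2}n0.
rewrite -mulrDl -natrD addnC cardsC card_ord mulfV ?mul1r //.
by rewrite pnatr_eq0 -lt0n.
Qed.

Lemma memcapH T x :
  (x \in capH R T) = (sm x setT == 0) && [forall A in T, sm x A == 0].
Proof.
rewrite /capH memv_cap memV0; case: eqP => //= h.
have hV : x \in V0 R n by rewrite memV0 h.
rewrite memvE; apply/subv_bigcapP/forall_inP => H A AT.
  by rewrite -(memH A hV) memvE H.
by rewrite -memvE memH // H.
Qed.

Definition relT T i j := [forall A in T, (i \in A) == (j \in A)].
Definition cls T i := [set j in [set: 'I_n] | relT T i j].

Lemma clsE T i j : (j \in cls T i) = relT T i j.
Proof. by rewrite !inE. Qed.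

Lemma relT_refl T i : relT T i i.
Proof. by apply/forall_inP => A _. Qed.

Lemma relT_sym T i j : relT T i j = relT T j i.
Proof. by apply/forall_inP/forall_inP => H A AT; rewrite eq_sym H. Qed.

Lemma relT_trans T i j k : relT T i j -> relT T j k -> relT T i k.
Proof.
move=> /forall_inP H1 /forall_inP H2; apply/forall_inP => A AT.
by rewrite (eqP (H1 A AT)) H2.
Qed.

Lemma relT_equiv T : {in [set: 'I_n] & &, equivalence_rel (relT T)}.
Proof.
move=> x y z _ _ _; split; first exact: relT_refl.
move=> hxy; apply/idP/idP => h.
  by apply: relT_trans h; rewrite relT_sym.
exact: relT_trans hxy h.
Qed.

Lemma piSE T : piS T = [set cls T i | i in [set: 'I_n]].
Proof. by []. Qed.

Lemma piS_part T : partition (piS T) [set: 'I_n].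
Proof. exact: (equivalence_partitionP (relT_equiv T)). Qed.

Lemma pblockE T i : pblock (piS T) i = cls T i.
Proof.
have [_ tiP _] := and3P (piS_part T).
apply: def_pblock => //; first by rewrite piSE imset_f ?inE.
by rewrite clsE relT_refl.
Qed.

Lemma cls_eq T i j : relT T i j -> cls T i = cls T j.
Proof.
move=> hij; apply/setP => k; rewrite !clsE; apply/idP/idP => h.
  by apply: relT_trans h; rewrite relT_sym.
exact: relT_trans hij h.
Qed.

Lemma compC A C : compatible A C -> compatible (~: A) C.
Proof. by rewrite /compatible setCK; case/or4P => ->; rewrite ?orbT. Qed.

Lemma sm0 x : sm x set0 = 0.
Proof. by rewrite /sm big_set0. Qed.

Lemma block_sums (S : {set {set 'I_n}})
  (Hcomp : forall A C, A \in S -> C \in S -> compatible A C) T x :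
  T \subset S -> sm x setT = 0 -> (forall A, A \in T -> sm x A = 0) ->
  forall i, sm x (cls T i) = 0.
Proof.
have [k] := ubnP #|T|; elim: k T => // k IH T hk TS h0 hA i.
have [->|[A0 A0T]] := set_0Vmem T.
  rewrite (_ : cls set0 i = setT) //; apply/setP => j.
  by rewrite clsE inE; apply/forall_inP => A; rewrite inE.
pose sides := [set D | (D \in T) || (~: D \in T)].
have A0s : A0 \in sides by rewrite /sides inE A0T.
case: (arg_minnP (fun D => #|D|) A0s) => D Ds Dmin.
have [A [AT hD]] : exists A, A \in T /\ (D = A \/ D = ~: A).
  move: (Ds : D \in sides); rewrite /sides inE => /orP[DT|DT]; first by exists D; split; [|left].
  by exists (~: D); split; [|right; rewrite setCK].
have hsub : forall C, C \in T -> (D \subset C) || (D \subset ~: C).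
  move=> C CT.
  have cDC : compatible D C.
    have c := Hcomp _ _ (subsetP TS _ AT) (subsetP TS _ CT).
    by case: hD => ->; [|apply: compC].
  case/or4P: cDC => /eqP/setP e.
  - apply/orP; right; apply/subsetP => j jD; move: (e j).
    by rewrite !inE jD /= => ->.
  - apply/orP; left; apply/subsetP => j jD; move: (e j).
    by rewrite !inE jD /= => /negbFE.
  - have CD : C \subset D.
      apply/subsetP => j jC; move: (e j); rewrite !inE jC andbT.
      by move/negbFE.
    have Cs : C \in sides by rewrite /sides inE CT.
    have : C == D by rewrite eqEcard CD Dmin.
    by move/eqP => ->; rewrite subxx.
  - have CD : ~: C \subset D.
      apply/subsetP => j jC; move: (e j); rewrite !inE.
      rewrite inE in jC; rewrite jC andbT.
      by move/negbFE.
    have Cs : ~: C \in sides by rewrite /sides inE setCK CT orbT.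
    have : ~: C == D by rewrite eqEcard CD Dmin.
    by move/eqP => ->; rewrite subxx orbT.
have smD : sm x D = 0.
  by case: hD => ->; [exact: hA | rewrite smC h0 hA // subrr].
pose T' := T :\ A.
have T'T : T' \subset T by apply: subsetDl.
have hk' : (#|T'| < k)%N.
  by move: hk; rewrite (cardsD1 A T) AT add1n ltnS.
have IH' := IH T' hk' (subset_trans T'T TS) h0
  (fun C CT' => hA C (subsetP T'T C CT')).
have relD : forall j l, j \in D -> l \in D -> relT T j l.
  move=> j l jD lD; apply/forall_inP => C CT.
  case/orP: (hsub C CT) => /subsetP s.
    by rewrite (s j jD) (s l lD).
  by move: (s j jD) (s l lD); rewrite !inE => /negbTE -> /negbTE ->.
case iD: (i \in D).
  rewrite (_ : cls T i = D) //; apply/setP => j; rewrite clsE.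
  apply/idP/idP => [/forall_inP/(_ A AT)|jD]; last exact: relD.
  by move=> /eqP e; case: hD iD => ->; rewrite ?inE e => ->.
have -> : cls T i = cls T' i :\: D.
  apply/setP => j; rewrite in_setD !clsE /relT.
  apply/forall_inP/andP => [H|[jD /forall_inP H]].
    split.
      apply/negP => jD; have := H A AT.
      by case: hD iD jD => ->; rewrite ?inE; case: (i \in A); case: (j \in A).
    apply/forall_inP => C; rewrite inE => /andP[_ CT]; exact: H.
  move=> C CT; have [->|CA] := eqVneq C A.
    by case: hD iD jD => ->; rewrite ?inE; case: (i \in A); case: (j \in A).
  by apply: H; rewrite !inE CA CT.
have e := big_setID (A := cls T' i) D (fun j => x 0 j).
rewrite /sm in IH'; rewrite /sm; move: (IH' i); rewrite e /= => {e}.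
have [none | [j /setIP[jc jD]]] := set_0Vmem (cls T' i :&: D).
  by rewrite none big_set0 add0r.
  have -> : cls T' i :&: D = D.
    apply/setIidPr/subsetP => l lD.
    rewrite clsE in jc; rewrite clsE.
    apply: relT_trans jc _.
    have := relD j l jD lD; apply: contraTT => /forall_inPn [C CT' hC].
    by apply/forall_inPn; exists C => //; rewrite inE in CT'; case/andP: CT'.
  by move: smD; rewrite /sm => ->; rewrite add0r.
Qed.

Lemma sm_sub x y A : sm (x - y) A = sm x A - sm y A.
Proof. by rewrite /sm -sumrB; apply: eq_bigr => i _; rewrite !mxE. Qed.

Lemma sm_ind1 i A : sm (ind R [set i]) A = (i \in A)%:R.
Proof.
rewrite /sm; case iA: (i \in A).
  rewrite (bigD1 i) //= big1 => [|k /andP[_ ki]]; first by rewrite !mxE inE eqxx addr0.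
  by rewrite !mxE inE (negbTE ki).
rewrite big1 // => k kA; rewrite !mxE inE; case: eqP => // ki.
by move: kA; rewrite ki iA.
Qed.

Lemma span_sub_capH T : (span_rel R (piS T) <= capH R T)%VS.
Proof.
apply/span_subvP => v /mapP [[i j]]; rewrite mem_enum /= => hp ->.
rewrite memcapH sm_sub !sm_ind1 !inE subrr eqxx /=.
rewrite inE /= !pblockE in hp; move/eqP: hp => hp.
have : j \in cls T i by rewrite hp clsE relT_refl.
rewrite clsE => /forall_inP h; apply/forall_inP => A AT.
by rewrite sm_sub !sm_ind1 (eqP (h A AT)) subrr.
Qed.

Lemma gen_mem T i j : relT T i j -> ind R [set i] - ind R [set j] \in span_rel R (piS T).
Proof.
move=> h; apply: memv_span; apply/mapP; exists (i, j) => //.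
by rewrite mem_enum inE /= !pblockE (cls_eq h).
Qed.

Lemma capH_sub_span (S : {set {set 'I_n}})
  (Hcomp : forall A C, A \in S -> C \in S -> compatible A C) T :
  T \subset S -> (capH R T <= span_rel R (piS T))%VS.
Proof.
move=> TS; apply/subvP => x; rewrite memcapH => /andP[/eqP h0 /forall_inP hA].
have bs := block_sums Hcomp TS h0 (fun A AT => eqP (hA A AT)).
pose r i := odflt i [pick j in cls T i].
have rrel i : relT T i (r i).
  rewrite /r; case: pickP => [j|none] /=; first by rewrite clsE.
  by have := none i; rewrite clsE relT_refl.
have req i j : relT T i j -> r i = r j.
  move=> h; rewrite /r (cls_eq h); case: pickP => //= none.
  by have := none j; rewrite clsE relT_refl.
have xE : x = \sum_i x 0 i *: (ind R [set i] - ind R [set r i]).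
  apply/rowP => k; rewrite summxE.
  rewrite (eq_bigr (fun i => x 0 i * (k == i)%:R - x 0 i * (k == r i)%:R)); last first.
    by move=> i _; rewrite !mxE !inE mulrBr.
  rewrite sumrB.
  rewrite (eq_bigr (fun i => if i == k then x 0 i else 0)); last first.
    by move=> i _; rewrite mulr_natr mulrb eq_sym.
  rewrite -big_mkcond big_pred1_eq.
  suff -> : \sum_i x 0 i * (k == r i)%:R = 0 by rewrite subr0.
  rewrite (eq_bigr (fun i => if i \in [set i | r i == k] then x 0 i else 0)); last first.
    by move=> i _; rewrite mulr_natr mulrb inE eq_sym.
  rewrite -big_mkcond /=.
  have -> : [set i | r i == k] = if r k == k then cls T k else set0.
    apply/setP => i; rewrite inE; have [rk|rk] := eqVneq (r k) k.
      rewrite clsE; apply/eqP/idP => [ri|ki].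
        have ik : relT T i k by rewrite -ri rrel.
        by rewrite relT_sym.
      by rewrite -(req _ _ ki) rk.
    rewrite inE; apply/negP => /eqP ri; move/eqP: rk => rk; apply: rk.
    have ik : relT T i k by rewrite -ri rrel.
    by rewrite -(req _ _ ik) ri.
  by case: eqP => _; [exact: bs | exact: sm0].
rewrite xE; apply: memv_suml => i _; apply: memvZ; apply: gen_mem; exact: rrel.
Qed.


Section Main.
Variables (S : {set {set 'I_n}})
  (Hcomp : forall A C, A \in S -> C \in S -> compatible A C).

Lemma P1 T : T \subset S -> capH R T = span_rel R (piS T).
Proof.
by move=> TS; apply/eqP; rewrite eqEsubv (capH_sub_span Hcomp TS) span_sub_capH.
Qed.

Lemma cls_sub_of_span T T' : T \subset S ->
  (span_rel R (piS T') <= span_rel R (piS T))%VS -> forall i, cls T' i \subset cls T i.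
Proof.
move=> TS hs i; apply/subsetP => j; rewrite clsE => h.
have := subvP hs _ (gen_mem h); rewrite -(P1 TS) memcapH => /andP[/eqP h0 /forall_inP hA].
have := block_sums Hcomp TS h0 (fun A AT => eqP (hA A AT)) i.
rewrite sm_sub !sm_ind1 clsE relT_refl; case: (j \in cls T i) => //.
by move/eqP; rewrite subr0 oner_eq0.
Qed.

Lemma span_of_cls_sub T T' : (forall i, cls T' i \subset cls T i) ->
  (span_rel R (piS T') <= span_rel R (piS T))%VS.
Proof.
move=> hs; apply/span_subvP => v /mapP [[i j]]; rewrite mem_enum inE /= => hp ->.
rewrite !pblockE in hp; move/eqP: hp => hp.
have : j \in cls T' i by rewrite hp clsE relT_refl.
by move/(subsetP (hs i)); rewrite clsE; apply: gen_mem.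
Qed.

Lemma piS_eq T T' : (forall i, cls T i = cls T' i) -> piS T = piS T'.
Proof. by move=> h; rewrite !piSE; apply: eq_imset. Qed.

Lemma refines_cls T T' : refines (piS T') (piS T) <-> forall i, cls T' i \subset cls T i.
Proof.
split.
  move=> /forall_inP h i.
  have := h (cls T' i); rewrite piSE imset_f ?inE // => /(_ isT) /exists_inP [C].
  rewrite piSE => /imsetP [l _ ->] sub.
  have : i \in cls T l by apply: (subsetP sub); rewrite clsE relT_refl.
  by rewrite clsE => /cls_eq <-.
move=> h; apply/forall_inP => B; rewrite piSE => /imsetP [i _ ->].
by apply/exists_inP; exists (cls T i); rewrite ?piSE ?imset_f ?inE.
Qed.

End Main.
End S.

Lemma im_piP n (S rho : {set {set 'I_n}}) :
  rho \in im_pi S <-> exists2 T : {set {set 'I_n}}, T \subset S & piS T = rho.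
Proof.
rewrite unfold_in /im_pi; split; first by move=> /existsP [T /andP [TS /eqP <-]]; exists T.
by move=> [T TS <-]; apply/existsP; exists T; rewrite TS eqxx.
Qed.

Unset Implicit Arguments.
Theorem mainTheorem7 (R : realFieldType) (n : nat) (S : {set {set 'I_n}})
  (HS : forall A, A \in S -> is_split A)
  (HSset : forall A, A \in S -> ~: A \notin S)
  (Hcomp : forall A C, A \in S -> C \in S -> compatible A C) :
  (forall S' : {set {set 'I_n}}, S' \subset S -> capH R S' = span_rel R (piS S'))
  /\ (exists f : {set {set 'I_n}} -> {vspace 'rV[R]_n},
        [/\ forall S' : {set {set 'I_n}}, S' \subset S -> f (piS S') = capH R S',
            {in im_pi S &, injective f},
            forall U : {vspace 'rV[R]_n}, U \in int_poset R S <-> exists2 rho, rho \in im_pi S & f rho = U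
          & {in im_pi S &, forall rho rho' : {set {set 'I_n}},
                refines rho' rho <-> (f rho' <= f rho)%VS}])
  /\ (forall S' : {set {set 'I_n}}, S' \subset S ->
        mcl R S S' = [set A in S | piS (A |: S') == piS S']).
Proof.
have p1 := @P1 R n S Hcomp.
have csub := @cls_sub_of_span R n S Hcomp.
split; first exact: p1.
split.
  exists (span_rel R); split.
  - by move=> S' SS; rewrite p1.
  - move=> rho rho' /im_piP [T TS <-] /im_piP [T' T'S <-] e.
    apply: piS_eq => i; apply/eqP; rewrite eqEsubset.
    rewrite (csub _ _ TS) ?e //.
    by rewrite (csub _ _ T'S) ?e.
  - move=> U; split.
      move=> /existsP [T /andP [TS /eqP ->]].
      by exists (piS T); [apply/im_piP; exists T | rewrite p1].
    move=> [rho /im_piP [T TS <-] <-]; apply/existsP; exists T.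
    by apply/andP; split => //; rewrite (p1 _ TS).
  - move=> rho rho' /im_piP [T TS <-] /im_piP [T' T'S <-].
    split => [/refines_cls|h]; first exact: span_of_cls_sub.
    by apply/refines_cls; exact: (csub _ _ TS).
move=> S' SS; apply/setP => A; rewrite !inE; case AS: (A \in S) => //=.
have TA : A |: S' \subset S by rewrite subUset sub1set AS.
have capE : forall x, (x \in capH R (A |: S')) = (x \in capH R S') && (sm x A == 0).
  move=> x; rewrite !memcapH; case: (sm x setT == 0) => //=.
  apply/forall_inP/andP => [h|[/forall_inP h hA] C].
    split; last by apply: h; rewrite !inE eqxx.
    by apply/forall_inP => C CS; apply: h; rewrite !inE CS orbT.
  by rewrite !inE => /orP [/eqP ->|]; [exact: hA| exact: h].
apply/idP/eqP => [hsub|e].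
  have e1 : capH R (A |: S') = capH R S'.
    apply/vspaceP => x; rewrite capE; case xS: (x \in capH R S') => //=.
    have := subvP hsub x xS; rewrite memH //.
    by move: xS; rewrite /capH memv_cap => /andP [].
  apply: piS_eq => i; apply/eqP; rewrite eqEsubset.
  rewrite (csub _ _ SS) -?(p1 _ SS) -?(p1 _ TA) ?e1 //.
  by rewrite (csub _ _ TA) -?(p1 _ SS) -?(p1 _ TA) ?e1.
have e1 : capH R (A |: S') = capH R S' by rewrite (p1 _ SS) (p1 _ TA) e.
apply/subvP => x xS.
have : x \in capH R (A |: S') by rewrite e1.
rewrite capE xS /= => h0.
have xV : x \in V0 R n by move: xS; rewrite /capH memv_cap => /andP [].
by rewrite memH.
Qed.
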